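(* For real $p\neq 0$, the inequality $2\left( \frac{\tanh x}{x}\right) ^{p}<\left( \frac{x}{\sinh x}\right) ^{4p}+1$ holds for all $x\in(0,\pi/2)$ if and only if $p<0$ or $p\geq 6/5$. *)

(* Defs.v *)
From Stdlib Require Export Reals.

(* Main.v *)
Require Import Defs.
From Stdlib Require Import Reals.
From Coquelicot Require Import Coquelicot.
From Stdlib Require Import Reals Lra Lia Psatz List Factorial.
Open Scope R_scope.
Import ListNotations.

Definition cf (j : R) (k n : nat) : R :=
  if Nat.leb k n then j ^ (n - k) / INR (fact (n - k)) else 0.

Lemma ser1 j k x : is_series (fun n => cf j k n * x ^ n) (x ^ k * exp (j * x)).
Proof.
  pose proof (is_exp_Reals (j * x)) as E.
  assert (E2 : is_pseries (fun n => j ^ n / INR (fact n)) x (exp (j * x))).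
  { apply is_pseries_R. apply is_pseries_R in E.
    eapply is_series_ext; [|exact E]. intros n. simpl.
    rewrite Rpow_mult_distr. unfold Rdiv. ring. }
  pose proof (is_pseries_incr_n _ k _ _ E2) as E3.
  apply is_pseries_R in E3.
  rewrite pow_n_pow in E3.
  eapply is_series_ext; [|exact E3].
  intros n. simpl. unfold scal; simpl; unfold mult; simpl. rewrite PS_incr_n_simplify. unfold cf.
  destruct (Compare_dec.le_lt_dec k n) as [H|H].
  - rewrite (proj2 (Nat.leb_le k n) H). reflexivity.
  - replace (Nat.leb k n) with false. simpl. unfold zero; simpl. ring.
    symmetry. apply Nat.leb_gt. exact H.
Qed.

Definition trm := (R * nat * R)%type.
Fixpoint ev (l : list trm) (x : R) : R :=
  match l with nil => 0 | (c, k, j) :: t => c * (x ^ k * exp (j * x)) + ev t x end.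
Fixpoint co (l : list trm) (n : nat) : R :=
  match l with nil => 0 | (c, k, j) :: t => c * cf j k n + co t n end.

Lemma ser_l l x : is_series (fun n => co l n * x ^ n) (ev l x).
Proof.
  induction l as [|[[c k] j] t IH]; simpl.
  - apply is_series_Reals. intros eps He. exists 0%nat. intros n _.
    assert (Z : forall m, sum_f_R0 (fun n => 0 * x ^ n) m = 0).
    { induction m; simpl; [ring|rewrite IHm; ring]. }
    rewrite Z. unfold R_dist. rewrite Rminus_0_r, Rabs_R0. exact He.
  - pose proof (is_series_plus _ _ _ _ (is_series_scal c _ _ (ser1 j k x)) IH) as P.
    eapply is_series_ext; [|exact P].
    intros n. unfold plus, scal; simpl. unfold mult; simpl. ring.
Qed.

Lemma co_lower l x N : (forall n, 0 <= co l n) -> 0 <= x -> co l N * x ^ N <= ev l x.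
Proof.
  intros Hc Hx.
  pose proof (ser_l l x) as S. apply is_series_Reals in S.
  assert (Hp : forall n, 0 <= co l n * x ^ n).
  { intros n. apply Rmult_le_pos; auto. apply pow_le; auto. }
  apply Rle_trans with (sum_f_R0 (fun n => co l n * x ^ n) N).
  - destruct N; simpl; [lra|].
    pose proof (cond_pos_sum _ N Hp). lra.
  - apply sum_incr; auto.
Qed.
Lemma cf0 j n : cf j 0 n = j ^ n / INR (fact n).
Proof. unfold cf. simpl. rewrite Nat.sub_0_r. reflexivity. Qed.
Lemma cfS j k n : cf j (S k) (S n) = cf j k n.
Proof. reflexivity. Qed.

Lemma pm3 m : (-3) ^ m = (-1) ^ m * 3 ^ m.
Proof. rewrite <- Rpow_mult_distr. f_equal. lra. Qed.

Definition H2l : list trm := [ ((1/4), 0%nat, (-3)); ((-3/4), 0%nat, (-1)); ((3/4), 0%nat, (1)); ((-1/4), 0%nat, (3)); ((-3/4), 1%nat, (-3)); ((3/4), 1%nat, (-1)); ((3/4), 1%nat, (1)); ((-3/4), 1%nat, (3)); ((-3/8), 2%nat, (-3)); ((-3/8), 2%nat, (-1)); ((3/8), 2%nat, (1)); ((3/8), 2%nat, (3)); ((5/2), 3%nat, (-1)); ((5/2), 3%nat, (1)) ].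

Lemma H2_form m : let M := INR m in
  co H2l (S (S (S m))) * (INR (fact m) * (M + 1) * (M + 2) * (M + 3)) =
  (1 + (-1) ^ m) * (((81/4) + (241/8)*M^1 + (123/8)*M^2 + (5/2)*M^3) + 3 ^ m * ((-81/4) + (-9/8)*M^1 + (9/8)*M^2)).
Proof.
  intros M. unfold H2l. cbn [co]. rewrite !cfS, !cf0.
  rewrite !fact_simpl, !mult_INR. unfold M. rewrite !S_INR.
  cbn [pow]. rewrite pm3, pow1.
  pose proof (INR_fact_lt_0 m). pose proof (pos_INR m).
  field. repeat split; lra.
Qed.

Lemma div_nonneg_of a d : 0 < d -> 0 <= a * d -> 0 <= a.
Proof. intros Hd H. nra. Qed.

Lemma H2_nonneg n : 0 <= co H2l n.
Proof.
  destruct n as [|[|[|m]]].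
  1-3: unfold H2l; cbn [co]; unfold cf; simpl; lra.
  pose proof (H2_form m) as F. cbv zeta in F.
  pose proof (INR_fact_lt_0 m). pose proof (pos_INR m).
  assert (Hd : 0 < INR (fact m) * (INR m + 1) * (INR m + 2) * (INR m + 3)).
  { repeat apply Rmult_lt_0_compat; lra. }
  apply (div_nonneg_of _ _ Hd). rewrite F.
  destruct (Nat.Even_or_Odd m) as [[i ->]|[i ->]].
  - rewrite pow_1_even. apply Rmult_le_pos; [lra|].
    destruct i as [|[|[|i]]]; [simpl; lra|simpl; lra|simpl; lra|].
    pose proof (pow_le 3 (2 * S (S (S i))) ltac:(lra)).
    assert (HM : 6 <= INR (2 * S (S (S i)))).
    { replace 6 with (INR 6) by (simpl; lra). apply le_INR. lia. }
    set (M := INR (2 * S (S (S i)))) in *. set (T := 3 ^ (2 * S (S (S i)))) in *.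
    assert (0 <= T * ((-81/4) + (-9/8)*M^1 + (9/8)*M^2)).
    { apply Rmult_le_pos; [lra|]. simpl. nra. }
    simpl. simpl in H2. nra.
  - replace (2 * i + 1)%nat with (S (2 * i)) by lia. rewrite pow_1_odd. lra.
Qed.

Lemma H2_9 : co H2l 9 = 58/945.
Proof.
  pose proof (H2_form 6) as F. cbv zeta in F.
  replace (INR (fact 6)) with 720 in F by (rewrite INR_IZR_INZ; reflexivity).
  replace (INR 6) with 6 in F by (simpl; lra).
  cbn [pow] in F. lra.
Qed.

Lemma e1 x : exp (1 * x) = exp x.
Proof. f_equal; ring. Qed.
Lemma em1 x : exp ((-1) * x) = / exp x.
Proof. rewrite <- exp_Ropp. f_equal; ring. Qed.
Lemma e3 x : exp (3 * x) = exp x ^ 3.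
Proof. replace (3 * x) with (x + x + x) by ring. rewrite !exp_plus. ring. Qed.
Lemma em3 x : exp ((-3) * x) = / exp x ^ 3.
Proof. replace ((-3) * x) with (- (3 * x)) by ring. rewrite exp_Ropp, e3. field. apply Rgt_not_eq, exp_pos. Qed.

Lemma ev_H2 x : ev H2l x = 3 * sinh x * (x * cosh x - sinh x) ^ 2 - 5 * sinh x ^ 3 + 5 * x ^ 3 * cosh x.
Proof.
  unfold H2l. cbn [ev]. rewrite e1, em1, e3, em3. unfold sinh, cosh. rewrite exp_Ropp.
  pose proof (exp_pos x). field. lra.
Qed.

Lemma H2_pos x : 0 < x -> 0 < 3 * sinh x * (x * cosh x - sinh x) ^ 2 - 5 * sinh x ^ 3 + 5 * x ^ 3 * cosh x.
Proof.
  intros Hx. rewrite <- ev_H2.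
  apply Rlt_le_trans with (co H2l 9 * x ^ 9).
  - rewrite H2_9. apply Rmult_lt_0_compat; [lra|]. apply pow_lt; lra.
  - apply co_lower; [exact H2_nonneg|lra].
Qed.

Definition H0l : list trm := [ ((1/2), 0%nat, (-1)); ((-1/2), 0%nat, (1)); ((1/2), 1%nat, (-1)); ((1/2), 1%nat, (1)) ].
Lemma H0_form m : let M := INR m in
  co H0l (S (S (S m))) * (INR (fact m) * (M + 1) * (M + 2) * (M + 3)) =
  (1 + (-1) ^ m) * (1 + (1/2) * M).
Proof.
  intros M. unfold H0l. cbn [co]. rewrite !cfS, !cf0.
  rewrite !fact_simpl, !mult_INR. unfold M. rewrite !S_INR.
  cbn [pow]. rewrite pow1.
  pose proof (INR_fact_lt_0 m). pose proof (pos_INR m).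
  field. repeat split; lra.
Qed.
Lemma H0_nonneg n : 0 <= co H0l n.
Proof.
  destruct n as [|[|[|m]]].
  1-3: unfold H0l; cbn [co]; unfold cf; simpl; lra.
  pose proof (H0_form m) as F. cbv zeta in F.
  pose proof (INR_fact_lt_0 m). pose proof (pos_INR m).
  assert (Hd : 0 < INR (fact m) * (INR m + 1) * (INR m + 2) * (INR m + 3)).
  { repeat apply Rmult_lt_0_compat; lra. }
  apply (div_nonneg_of _ _ Hd). rewrite F.
  destruct (Nat.Even_or_Odd m) as [[i ->]|[i ->]].
  - rewrite pow_1_even. apply Rmult_le_pos; lra.
  - replace (2 * i + 1)%nat with (S (2 * i)) by lia. rewrite pow_1_odd. lra.
Qed.
Lemma H0_3 : co H0l 3 = 1/3.
Proof.
  pose proof (H0_form 0) as F. cbv zeta in F. cbn [fact INR pow] in F. lra.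
Qed.
Lemma ev_H0 x : ev H0l x = x * cosh x - sinh x.
Proof.
  unfold H0l. cbn [ev]. rewrite e1, em1. unfold sinh, cosh. rewrite exp_Ropp.
  pose proof (exp_pos x). field. lra.
Qed.
Lemma H0_pos x : 0 < x -> sinh x < x * cosh x.
Proof.
  intros Hx. cut (0 < x * cosh x - sinh x); [lra|]. rewrite <- ev_H0.
  apply Rlt_le_trans with (co H0l 3 * x ^ 3).
  - rewrite H0_3. apply Rmult_lt_0_compat; [lra|]. apply pow_lt; lra.
  - apply co_lower; [exact H0_nonneg|lra].
Qed.

Definition H3l : list trm := [ ((-3/2), 0%nat, (-1)); ((3/2), 0%nat, (1)); ((-3/2), 1%nat, (-1)); ((-3/2), 1%nat, (1)); ((-1/2), 2%nat, (-1)); ((1/2), 2%nat, (1)) ].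
Lemma H3_form m : let M := INR m in
  co H3l (S (S (S m))) * (INR (fact m) * (M + 1) * (M + 2) * (M + 3)) =
  (1 + (-1) ^ m) * (M + (1/2) * M ^ 2).
Proof.
  intros M. unfold H3l. cbn [co]. rewrite !cfS, !cf0.
  rewrite !fact_simpl, !mult_INR. unfold M. rewrite !S_INR.
  cbn [pow]. rewrite pow1.
  pose proof (INR_fact_lt_0 m). pose proof (pos_INR m).
  field. repeat split; lra.
Qed.
Lemma H3_nonneg n : 0 <= co H3l n.
Proof.
  destruct n as [|[|[|m]]].
  1-3: unfold H3l; cbn [co]; unfold cf; simpl; lra.
  pose proof (H3_form m) as F. cbv zeta in F.
  pose proof (INR_fact_lt_0 m). pose proof (pos_INR m).
  assert (Hd : 0 < INR (fact m) * (INR m + 1) * (INR m + 2) * (INR m + 3)).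
  { repeat apply Rmult_lt_0_compat; lra. }
  apply (div_nonneg_of _ _ Hd). rewrite F.
  destruct (Nat.Even_or_Odd m) as [[i ->]|[i ->]].
  - rewrite pow_1_even. apply Rmult_le_pos; [lra|]. nra.
  - replace (2 * i + 1)%nat with (S (2 * i)) by lia. rewrite pow_1_odd. lra.
Qed.
Lemma ev_H3 x : ev H3l x = x ^ 2 * sinh x - 3 * (x * cosh x - sinh x).
Proof.
  unfold H3l. cbn [ev]. rewrite e1, em1. unfold sinh, cosh. rewrite exp_Ropp.
  pose proof (exp_pos x). field. lra.
Qed.
Lemma H3_le x : 0 < x -> 3 * (x * cosh x - sinh x) <= x ^ 2 * sinh x.
Proof.
  intros Hx. cut (0 <= x ^ 2 * sinh x - 3 * (x * cosh x - sinh x)); [lra|]. rewrite <- ev_H3.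
  apply Rle_trans with (co H3l 0 * x ^ 0).
  - apply Rmult_le_pos; [apply H3_nonneg|]. simpl; lra.
  - apply co_lower; [exact H3_nonneg|lra].
Qed.

Definition H1l : list trm := [ ((-1/8), 0%nat, (-3)); ((3/8), 0%nat, (-1)); ((-3/8), 0%nat, (1)); ((1/8), 0%nat, (3)); ((-1/2), 3%nat, (-1)); ((-1/2), 3%nat, (1)) ].
Lemma H1_form m : let M := INR m in
  co H1l (S (S (S m))) * (INR (fact m) * (M + 1) * (M + 2) * (M + 3)) =
  (1 + (-1) ^ m) * (((-27/8) + (-11/2)*M + (-3)*M^2 + (-1/2)*M^3) + 3 ^ m * (27/8)).
Proof.
  intros M. unfold H1l. cbn [co]. rewrite !cfS, !cf0.
  rewrite !fact_simpl, !mult_INR. unfold M. rewrite !S_INR.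
  cbn [pow]. rewrite pm3, pow1.
  pose proof (INR_fact_lt_0 m). pose proof (pos_INR m).
  field. repeat split; lra.
Qed.
Lemma pow3_bound m : (4 <= m)%nat -> (INR m + 1) * (INR m + 2) * (INR m + 3) + 3/4 <= 27/4 * 3 ^ m.
Proof.
  intros Hm. induction Hm.
  - simpl. lra.
  - rewrite S_INR. cbn [pow].
    assert (4 <= INR m) by (replace 4 with (INR 4) by (simpl; lra); apply le_INR; lia).
    nra.
Qed.
Lemma H1_nonneg n : 0 <= co H1l n.
Proof.
  destruct n as [|[|[|m]]].
  1-3: unfold H1l; cbn [co]; unfold cf; simpl; lra.
  pose proof (H1_form m) as F. cbv zeta in F.
  pose proof (INR_fact_lt_0 m). pose proof (pos_INR m).
  assert (Hd : 0 < INR (fact m) * (INR m + 1) * (INR m + 2) * (INR m + 3)).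
  { repeat apply Rmult_lt_0_compat; lra. }
  apply (div_nonneg_of _ _ Hd). rewrite F.
  destruct (Nat.Even_or_Odd m) as [[i ->]|[i ->]].
  - rewrite pow_1_even. apply Rmult_le_pos; [lra|].
    destruct i as [|[|i]]; [simpl; lra|simpl; lra|].
    pose proof (pow3_bound (2 * S (S i)) ltac:(lia)). nra.
  - replace (2 * i + 1)%nat with (S (2 * i)) by lia. rewrite pow_1_odd. lra.
Qed.
Lemma H1_7 : co H1l 7 = 1/15.
Proof.
  pose proof (H1_form 4) as F. cbv zeta in F.
  replace (INR (fact 4)) with 24 in F by (rewrite INR_IZR_INZ; reflexivity).
  replace (INR 4) with 4 in F by (simpl; lra).
  cbn [pow] in F. lra.
Qed.
Lemma ev_H1 x : ev H1l x = sinh x ^ 3 - x ^ 3 * cosh x.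
Proof.
  unfold H1l. cbn [ev]. rewrite e1, em1, e3, em3. unfold sinh, cosh. rewrite exp_Ropp.
  pose proof (exp_pos x). field. lra.
Qed.
Lemma H1_ge x : 0 < x -> x ^ 7 / 15 <= sinh x ^ 3 - x ^ 3 * cosh x.
Proof.
  intros Hx. rewrite <- ev_H1.
  apply Rle_trans with (co H1l 7 * x ^ 7).
  - rewrite H1_7. lra.
  - apply co_lower; [exact H1_nonneg|lra].
Qed.

Lemma bern r u : 1 <= r -> 1 + r * (exp u - 1) <= exp (r * u).
Proof.
  intros Hr.
  assert (h1 : exp u * (1 + (r * u - u)) <= exp (r * u)).
  { replace (r * u) with (u + (r * u - u)) at 2 by ring. rewrite exp_plus.
    apply Rmult_le_compat_l; [apply Rlt_le, exp_pos|apply exp_ineq1_le]. }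
  assert (h2 : exp u * (1 - u) <= 1).
  { pose proof (exp_ineq1_le (- u)) as H. pose proof (exp_pos u).
    replace 1 with (exp u * exp (- u)) at 2 by (rewrite <- exp_plus; replace (u + - u) with 0 by ring; apply exp_0).
    apply Rmult_le_compat_l; lra. }
  assert (h3 : (r - 1) * (exp u * (1 - u)) <= (r - 1) * 1) by (apply Rmult_le_compat_l; lra).
  nra.
Qed.

Lemma sinh_pos x : 0 < x -> 0 < sinh x.
Proof. intros Hx. unfold sinh. pose proof (exp_increasing (- x) x ltac:(lra)). lra. Qed.
Lemma cosh_pos x : 0 < cosh x.
Proof. unfold cosh. pose proof (exp_pos x). pose proof (exp_pos (- x)). lra. Qed.

Lemma key_equiv Z Kp : 0 < Z -> (2 * / Z < Kp / Z ^ 2 + 1 <-> 1 - Kp < (Z - 1) ^ 2).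
Proof.
  intros HZ.
  assert (E : Kp / Z ^ 2 + 1 - 2 * / Z = ((Z - 1) ^ 2 - (1 - Kp)) / Z ^ 2) by (field; lra).
  assert (HZ2 : 0 < Z ^ 2) by (apply pow_lt; lra).
  split; intros H.
  - assert (0 < ((Z - 1) ^ 2 - (1 - Kp)) / Z ^ 2) by lra.
    assert (0 < (Z - 1) ^ 2 - (1 - Kp)).
    { apply Rnot_le_lt. intros C. assert (((Z - 1) ^ 2 - (1 - Kp)) / Z ^ 2 <= 0).
      { unfold Rdiv. pose proof (Rinv_0_lt_compat _ HZ2). nra. } lra. }
    lra.
  - assert (0 < ((Z - 1) ^ 2 - (1 - Kp)) / Z ^ 2).
    { apply Rdiv_lt_0_compat; lra. } lra.
Qed.

Lemma reform x p : 0 < x ->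
  let Y := x * cosh x / sinh x in let Kk := x ^ 3 * cosh x / sinh x ^ 3 in
  Rpower (tanh x / x) p = / exp (p * ln Y) /\
  Rpower (x / sinh x) (4 * p) = exp (2 * p * ln Kk) / exp (p * ln Y) ^ 2.
Proof.
  intros Hx Y Kk.
  pose proof (sinh_pos x Hx) as Hs. pose proof (cosh_pos x) as Hc.
  assert (HY : 0 < Y) by (unfold Y; apply Rdiv_lt_0_compat; nra).
  assert (HK : 0 < Kk) by (unfold Kk; apply Rdiv_lt_0_compat; [apply Rmult_lt_0_compat; [apply pow_lt|]|apply pow_lt]; lra).
  unfold Rpower. split.
  - replace (tanh x / x) with (/ Y) by (unfold Y, tanh; field; lra).
    rewrite ln_Rinv by lra. rewrite <- exp_Ropp. f_equal. ring.
  - assert (Hxs : 0 < x / sinh x) by (apply Rdiv_lt_0_compat; lra).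
    assert (EK : Kk = Y * (x / sinh x) ^ 2) by (unfold Kk, Y; field; lra).
    assert (EL : ln Kk = ln Y + 2 * ln (x / sinh x)).
    { rewrite EK, ln_mult by (try apply pow_lt; lra). rewrite ln_pow by lra. simpl. ring. }
    replace (4 * p * ln (x / sinh x)) with (2 * p * ln Kk + - (2 * (p * ln Y))) by (rewrite EL; ring).
    rewrite exp_plus, exp_Ropp.
    replace (2 * (p * ln Y)) with (p * ln Y + p * ln Y) by ring. rewrite exp_plus. simpl. field.
    pose proof (exp_pos (p * ln Y)). lra.
Qed.

Lemma main_equiv x p : 0 < x ->
  let Y := x * cosh x / sinh x in let Kk := x ^ 3 * cosh x / sinh x ^ 3 in
  (2 * Rpower (tanh x / x) p < Rpower (x / sinh x) (4 * p) + 1 <->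
   1 - exp (2 * p * ln Kk) < (exp (p * ln Y) - 1) ^ 2).
Proof.
  intros Hx Y Kk. destruct (reform x p Hx) as [E1 E2]. fold Y Kk in E1, E2.
  rewrite E1, E2. apply key_equiv, exp_pos.
Qed.

Lemma YK_facts x : 0 < x ->
  let s := sinh x in let c := cosh x in
  let Y := x * c / s in let Kk := x ^ 3 * c / s ^ 3 in
  0 < s /\ 0 < c /\ 1 < Y /\ 0 < Kk /\ Kk < 1 /\ Y - 1 = (x * c - s) / s /\ 1 - Kk = (s ^ 3 - x ^ 3 * c) / s ^ 3.
Proof.
  intros Hx s c Y Kk.
  pose proof (sinh_pos x Hx) as Hs. pose proof (cosh_pos x) as Hc. fold s c in Hs, Hc.
  pose proof (H0_pos x Hx) as H0. pose proof (H1_ge x Hx) as H1. fold s c in H0, H1.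
  assert (Hx7 : 0 < x ^ 7) by (apply pow_lt; lra).
  assert (Hs3 : 0 < s ^ 3) by (apply pow_lt; lra).
  assert (Hx3 : 0 < x ^ 3) by (apply pow_lt; lra).
  repeat split; auto.
  - unfold Y. apply (Rmult_lt_reg_r s); [lra|]. unfold Rdiv. rewrite Rmult_assoc, Rinv_l; lra.
  - unfold Kk. apply Rdiv_lt_0_compat; nra.
  - unfold Kk. apply (Rmult_lt_reg_r (s ^ 3)); [lra|]. unfold Rdiv. rewrite Rmult_assoc, Rinv_l; lra.
  - unfold Y. field. lra.
  - unfold Kk. field. lra.
Qed.

Lemma case_neg x p : 0 < x -> p < 0 ->
  2 * Rpower (tanh x / x) p < Rpower (x / sinh x) (4 * p) + 1.
Proof.
  intros Hx Hp. apply main_equiv; auto.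
  destruct (YK_facts x Hx) as (Hs & Hc & HY & HK0 & HK1 & _ & _).
  assert (ln (x ^ 3 * cosh x / sinh x ^ 3) < 0).
  { rewrite <- ln_1. apply ln_increasing; auto. }
  assert (1 < exp (2 * p * ln (x ^ 3 * cosh x / sinh x ^ 3))).
  { rewrite <- exp_0. apply exp_increasing. nra. }
  pose proof (pow2_ge_0 (exp (p * ln (x * cosh x / sinh x)) - 1)). lra.
Qed.

Lemma case_big x p : 0 < x -> 6 / 5 <= p ->
  2 * Rpower (tanh x / x) p < Rpower (x / sinh x) (4 * p) + 1.
Proof.
  intros Hx Hp. apply main_equiv; auto.
  destruct (YK_facts x Hx) as (Hs & Hc & HY & HK0 & HK1 & EY & EK).
  set (s := sinh x) in *. set (c := cosh x) in *.
  set (Y := x * c / s) in *. set (Kk := x ^ 3 * c / s ^ 3) in *.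
  pose proof (H2_pos x Hx) as H2. fold s c in H2.
  assert (B1 : 1 + p * (Y - 1) <= exp (p * ln Y)).
  { pose proof (bern p (ln Y) ltac:(lra)) as B. rewrite exp_ln in B by lra. exact B. }
  assert (B2 : 1 + (2 * p) * (Kk - 1) <= exp (2 * p * ln Kk)).
  { pose proof (bern (2 * p) (ln Kk) ltac:(lra)) as B. rewrite exp_ln in B by lra. exact B. }
  assert (K3 : 3 * (Y - 1) ^ 2 > 5 * (1 - Kk)).
  { rewrite EY, EK. assert (Hs3 : 0 < s ^ 3) by (apply pow_lt; lra).
    replace (3 * ((x * c - s) / s) ^ 2) with ((3 * s * (x * c - s) ^ 2) / s ^ 3) by (field; lra).
    replace (5 * ((s ^ 3 - x ^ 3 * c) / s ^ 3)) with ((5 * (s ^ 3 - x ^ 3 * c)) / s ^ 3) by (field; lra).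
    apply Rmult_lt_compat_r; [apply Rinv_0_lt_compat; lra|]. lra. }
  set (Z := exp (p * ln Y)) in *. set (Kp := exp (2 * p * ln Kk)) in *.
  assert (HZ1 : p * (Y - 1) <= Z - 1) by lra.
  assert (Hpos : 0 < p * (Y - 1)) by nra.
  assert (Sq : (p * (Y - 1)) ^ 2 <= (Z - 1) ^ 2) by (apply pow_incr; lra).
  assert (1 - Kp <= 2 * p * (1 - Kk)) by nra.
  assert (2 * p * (1 - Kk) < (p * (Y - 1)) ^ 2).
  { assert (HY2 : 0 < (Y - 1) ^ 2) by (apply pow_lt; lra).
    assert (p * (6/5) * (Y - 1) ^ 2 <= p * p * (Y - 1) ^ 2).
    { apply Rmult_le_compat_r; [lra|]. apply Rmult_le_compat_l; lra. }
    assert (2 * p * (1 - Kk) < p * (6/5) * (Y - 1) ^ 2) by nra.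
    replace ((p * (Y - 1)) ^ 2) with (p * p * (Y - 1) ^ 2) by ring. lra. }
  lra.
Qed.

Lemma exp_le_inv v : v < 1 -> exp v <= / (1 - v).
Proof.
  intros Hv. pose proof (exp_ineq1_le (- v)). pose proof (exp_pos v).
  assert (E : exp v * exp (- v) = 1) by (rewrite <- exp_plus; replace (v + - v) with 0 by ring; apply exp_0).
  apply (Rmult_le_reg_r (1 - v)); [lra|]. rewrite Rinv_l by lra. nra.
Qed.

Lemma final_arith p : 0 < p -> p < 6 / 5 ->
  let x := (6 / 5 - p) / 5 in let v := p * x ^ 2 / 3 in
  let w := 2 * p * x ^ 4 * (1 - x) ^ 3 / 15 in
  v ^ 2 * (1 + w) <= w * (1 - v) ^ 2.
Proof.
  intros Hp1 Hp2 x v w.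
  assert (Hx0 : 0 < x) by (unfold x; lra).
  assert (Hx1 : x <= 6 / 25) by (unfold x; lra).
  assert (Hpx : p = 6 / 5 - 5 * x) by (unfold x; lra).
  assert (Hx2 : 0 < x ^ 2) by (apply pow_lt; lra).
  assert (Hx4 : 0 < x ^ 4) by (apply pow_lt; lra).
  assert (Hv0 : 0 <= v) by (unfold v; apply Rmult_le_pos; [apply Rmult_le_pos|]; lra).
  assert (Hv1 : v <= 2 * x ^ 2 / 5) by (unfold v; nra).
  assert (Hxx : x ^ 2 <= 6 / 25 * x) by (simpl; nra).
  assert (Hc3 : 1 - 3 * x <= (1 - x) ^ 3) by (simpl; nra).
  assert (Hc3p : 0 <= (1 - x) ^ 3) by (apply pow_le; lra).
  assert (Hc3u : (1 - x) ^ 3 <= 1) by (simpl; nra).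
  assert (Hw0 : 0 <= w) by (unfold w; apply Rmult_le_pos; [|lra]; apply Rmult_le_pos; [|lra]; apply Rmult_le_pos; lra).
  assert (Hx4b : x ^ 4 <= x) by (simpl; nra).
  assert (Hw1 : w <= 4 * x / 25) by (unfold w; nra).
  assert (Hv2 : 1 - 2 * v <= (1 - v) ^ 2) by (simpl; nra).
  assert (Hvv : v ^ 2 = p * x ^ 4 * (p / 9)) by (unfold v; simpl; field).
  assert (Hww : w = p * x ^ 4 * (2 * (1 - x) ^ 3 / 15)) by (unfold w; field).
  assert (Hpx4 : 0 < p * x ^ 4) by nra.
  assert (G : p / 9 * (1 + w) <= 2 * (1 - x) ^ 3 / 15 * (1 - v) ^ 2).
  { assert (R1 : (1 - 3 * x) * (1 - 2 * v) <= (1 - x) ^ 3 * (1 - v) ^ 2).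
    { apply Rmult_le_compat; try lra. }
    assert (p * w <= 6 / 5 * (4 * x / 25)) by nra.
    nra. }
  replace (v ^ 2 * (1 + w)) with (p * x ^ 4 * (p / 9 * (1 + w))) by (rewrite Hvv; ring).
  replace (w * (1 - v) ^ 2) with (p * x ^ 4 * (2 * (1 - x) ^ 3 / 15 * (1 - v) ^ 2)) by (rewrite Hww; ring).
  apply Rmult_le_compat_l; lra.
Qed.

Lemma exp_mono a b : a <= b -> exp a <= exp b.
Proof. intros H. destruct (Rle_lt_or_eq_dec _ _ H) as [h|h]; [apply Rlt_le, exp_increasing; exact h|rewrite h; lra]. Qed.

Lemma case_mid p : 0 < p -> p < 6 / 5 ->
  let x := (6 / 5 - p) / 5 in
  ~ (2 * Rpower (tanh x / x) p < Rpower (x / sinh x) (4 * p) + 1).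
Proof.
  intros Hp1 Hp2 x.
  pose proof (final_arith p Hp1 Hp2) as FA. fold x in FA. cbv zeta in FA.
  assert (Hx0 : 0 < x) by (unfold x; lra).
  assert (Hx1 : x <= 6 / 25) by (unfold x; lra).
  rewrite (main_equiv x p Hx0). apply Rle_not_lt.
  destruct (YK_facts x Hx0) as (Hs & Hc & HY & HK0 & HK1 & EY & EK).
  pose proof (H3_le x Hx0) as H3. pose proof (H1_ge x Hx0) as H1. pose proof (H0_pos x Hx0) as H0.
  set (s := sinh x) in *. set (c := cosh x) in *.
  set (Y := x * c / s) in *. set (Kk := x ^ 3 * c / s ^ 3) in *.
  set (v := p * x ^ 2 / 3) in *. set (w := 2 * p * x ^ 4 * (1 - x) ^ 3 / 15) in *.
  assert (Hx2 : 0 < x ^ 2) by (apply pow_lt; lra).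
  assert (LY0 : 0 <= ln Y) by (rewrite <- ln_1; apply Rlt_le, ln_increasing; lra).
  assert (LY1 : ln Y <= Y - 1) by (pose proof (exp_ineq1_le (ln Y)); rewrite exp_ln in *; lra).
  assert (Y1 : Y - 1 <= x ^ 2 / 3).
  { rewrite EY. apply (Rmult_le_reg_r s); [lra|]. unfold Rdiv. rewrite Rmult_assoc, Rinv_l by lra. nra. }
  assert (Hv1 : v < 1) by (unfold v; simpl; nra).
  assert (Hv0 : 0 <= v) by (unfold v; apply Rmult_le_pos; [apply Rmult_le_pos|]; lra).
  assert (Zu : exp (p * ln Y) <= / (1 - v)).
  { apply Rle_trans with (exp v); [|apply exp_le_inv; lra].
    apply exp_mono. pose proof (Rmult_le_compat_l p _ _ (Rlt_le _ _ Hp1) (Rle_trans _ _ _ LY1 Y1)).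
    unfold v. lra. }
  assert (Zl : 1 <= exp (p * ln Y)).
  { rewrite <- exp_0. apply exp_mono. nra. }
  assert (LK : ln Kk <= Kk - 1) by (pose proof (exp_ineq1_le (ln Kk)); rewrite exp_ln in *; lra).
  assert (Hex : c <= / (1 - x)).
  { apply Rle_trans with (exp x); [|apply exp_le_inv; lra].
    unfold c, cosh. pose proof (exp_increasing (- x) x ltac:(lra)). lra. }
  assert (Hsx : s <= x / (1 - x)).
  { apply Rle_trans with (x * c); [lra|]. unfold Rdiv. apply Rmult_le_compat_l; lra. }
  assert (Hs3 : s ^ 3 <= x ^ 3 / (1 - x) ^ 3).
  { replace (x ^ 3 / (1 - x) ^ 3) with ((x / (1 - x)) ^ 3) by (field; lra). apply pow_incr; lra. }
  assert (Hs3p : 0 < s ^ 3) by (apply pow_lt; lra).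
  assert (H1x : 0 < (1 - x) ^ 3) by (apply pow_lt; lra).
  assert (Kb : x ^ 4 * (1 - x) ^ 3 / 15 <= 1 - Kk).
  { rewrite EK. apply Rle_trans with (x ^ 7 / 15 / s ^ 3).
    - apply (Rmult_le_reg_r (s ^ 3)); [lra|].
      replace (x ^ 7 / 15 / s ^ 3 * s ^ 3) with (x ^ 7 / 15) by (field; lra).
      apply Rle_trans with (x ^ 4 * (1 - x) ^ 3 / 15 * (x ^ 3 / (1 - x) ^ 3)).
      + apply Rmult_le_compat_l; [|lra]. apply Rmult_le_pos; [|lra]. apply Rmult_le_pos; [apply pow_le|]; lra.
      + right. field. lra.
    - unfold Rdiv at 2 3. apply Rmult_le_compat_r; [apply Rlt_le, Rinv_0_lt_compat; lra|]. lra. }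
  assert (Hw0 : 0 <= w) by (unfold w; apply Rmult_le_pos; [|lra]; apply Rmult_le_pos; [|lra]; apply Rmult_le_pos; [|apply pow_le]; lra).
  assert (Kw : exp (2 * p * ln Kk) <= / (1 + w)).
  { apply Rle_trans with (exp (- w)).
    - apply exp_mono. unfold w.
      assert (ln Kk <= - (x ^ 4 * (1 - x) ^ 3 / 15)) by lra.
      assert (2 * p * ln Kk <= 2 * p * - (x ^ 4 * (1 - x) ^ 3 / 15)) by (apply Rmult_le_compat_l; lra). lra.
    - pose proof (exp_ineq1_le w). pose proof (exp_pos w). rewrite exp_Ropp.
      apply Rinv_le_contravar; lra. }
  set (Z := exp (p * ln Y)) in *. set (Kp := exp (2 * p * ln Kk)) in *.
  assert (Zd : Z - 1 <= v / (1 - v)).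
  { replace (v / (1 - v)) with (/ (1 - v) - 1) by (field; lra). lra. }
  assert (Sq : (Z - 1) ^ 2 <= (v / (1 - v)) ^ 2) by (apply pow_incr; lra).
  assert (Kd : w / (1 + w) <= 1 - Kp).
  { replace (w / (1 + w)) with (1 - / (1 + w)) by (field; lra). lra. }
  assert (Fin : (v / (1 - v)) ^ 2 <= w / (1 + w)).
  { replace ((v / (1 - v)) ^ 2) with (v ^ 2 / (1 - v) ^ 2) by (field; lra).
    assert (0 < (1 - v) ^ 2) by (apply pow_lt; lra).
    apply (Rmult_le_reg_r ((1 - v) ^ 2 * (1 + w))); [apply Rmult_lt_0_compat; lra|].
    replace (v ^ 2 / (1 - v) ^ 2 * ((1 - v) ^ 2 * (1 + w))) with (v ^ 2 * (1 + w)) by (field; lra).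
    replace (w / (1 + w) * ((1 - v) ^ 2 * (1 + w))) with (w * (1 - v) ^ 2) by (field; lra).
    exact FA. }
  lra.
Qed.

Theorem proposition4p14 (p : R) (hp : p <> 0) :
  (forall x : R, 0 < x < PI / 2 ->
     2 * Rpower (tanh x / x) p < Rpower (x / sinh x) (4 * p) + 1)
  <-> (p < 0 \/ 6 / 5 <= p).
Proof.
  split.
  - intros H. destruct (Rlt_le_dec p 0) as [h|h]; [left; exact h|].
    destruct (Rle_lt_dec (6/5) p) as [h2|h2]; [right; exact h2|].
    exfalso. assert (Hp : 0 < p) by lra.
    apply (case_mid p Hp h2). apply H. pose proof PI2_1. split; lra.
  - intros [h|h] x [Hx _]; [apply case_neg|apply case_big]; auto.
Qed.
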